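(* Let $L\in\mathbb N$ satisfy $\operatorname{rank}\mathcal O_L(\Sigma_s)=n$ and let $K=[A_L,\dots,A_1,B_L,\dots,B_1]\in\mathbb R^{m\times L(m+r)}$ with $A_i\in\mathbb R^{m\times m}$, $B_i\in\mathbb R^{m\times r}$. Consider the dynamic output feedback controller $\mathbf K_s$: $\xi(t+1)=\Xi\xi(t)+\Lambda y(t)$, $u(t)=\Omega\xi(t)$, $\xi\in\mathbb R^{Lm}$, $t\ge0$, where $\Xi\in\mathbb R^{Lm\times Lm}$ has $I_m$ in blocks $(k+1,k)$, $k=1,\dots,L-1$, last block column $[A_L;A_{L-1};\dots;A_1]$, and zeros elsewhere; $\Lambda=[B_L;B_{L-1};\dots;B_1]$; $\Omega=[0,\dots,0,I_m]$; and $\xi(0)=\mathcal O_L(\mathbf K_s)^{-1}[I,\,-\mathcal H_L(\mathbf K_s)]\,v(L)$, where $\mathcal O_L(\mathbf K_s)=[\Omega^\top,(\Omega\Xi)^\top,\dots,(\Omega\Xi^{L-1})^\top]^\top$ and $\mathcal H_L(\mathbf K_s)$ is the block lower-triangular Toeplitz matrix with $(i,j)$ block $G_{i-j}$, $G_0=0$, $G_k=\Omega\Xi^{k-1}\Lambda$. Then the signals $u$ and $y$ of the closed loop of the IOH system $v(t+1)=\Theta v(t)+\Pi u(t)$, $y(t)=C\Gamma v(t)$ with the IOH feedback $u(t)=Kv(t)$, $t\ge L$, are identical to those of the feedback interconnection of $\Sigma_s$ and $\mathbf K_s$.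
   Context: System $\Sigma_s$: $x(t+1)=Ax(t)+Bu(t)$, $y(t)=Cx(t)$, $t\ge0$, $x\in\mathbb R^n,u\in\mathbb R^m,y\in\mathbb R^r$; standing assumptions: $(A,B,C)$ minimal and $A$ Schur. $\mathcal R_L(\Sigma_s)=[A^{L-1}B,\dots,B]$, $\mathcal O_L(\Sigma_s)=[C^\top,\dots,(CA^{L-1})^\top]^\top$, $\mathcal H_L(\Sigma_s)$ the $Lr\times Lm$ block lower-triangular Toeplitz matrix with $(i,j)$ block $H_{i-j}$, $H_0=0$, $H_k=CA^{k-1}B$. IOH: $v(t)=[u(t-L)^\top,\dots,u(t-1)^\top,y(t-L)^\top,\dots,y(t-1)^\top]^\top\in\mathbb R^{L(m+r)}$, $t\ge L$; $v(L)$ is the IOH at time $L$ (common to both loops). $\Gamma=[\mathcal R_L-A^L\mathcal O_L^\dagger\mathcal H_L,\ A^L\mathcal O_L^\dagger]$; $\Theta=\mathrm{diag}(S_m,S_r)+EC\Gamma$, with $S_k$ the $Lk\times Lk$ block matrix having $I_k$ in blocks $(i,i+1)$, $i<L$, zeros elsewhere, $E$ having $I_r$ in its last $r$ rows, zeros elsewhere; $\Pi\in\mathbb R^{L(m+r)\times m}$ has $I_m$ in rows $(L-1)m+1,\dots,Lm$, zeros elsewhere. *)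

(* Defs.v *)
(* Real-closed field R (covers the reals); complex numbers R[i]
   from mathcomp-real-closed are used only to state the Schur property. *)
From HB Require Import structures.
From mathcomp Require Import all_boot all_order all_algebra.
From mathcomp Require Import complex.
Set Implicit Arguments. Unset Strict Implicit. Unset Printing Implicit Defensive.
Import Order.TTheory GRing.Theory Num.Theory.
Local Open Scope ring_scope.

Section Defs.
Variable R : rcfType.

(* total entry access with nat indices (0 outside the range) *)
Definition mxget p q (M : 'M[R]_(p, q)) (a b : nat) : R :=
  match @insub _ (fun k => k < p)%N 'I_p a, @insub _ (fun k => k < q)%N 'I_q b with
  | Some i, Some j => M i j
  | _, _ => 0
  end.

(* block matrices, blocks indexed from 0 *)
Definition blk p q (P Q : nat) (F : nat -> nat -> 'M[R]_(p, q)) : 'M[R]_(P * p, Q * q) :=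
  \matrix_(i < P * p, j < Q * q) mxget (F (i %/ p) (j %/ q))%N (i %% p)%N (j %% q)%N.
Definition blkcol p q (P : nat) (F : nat -> 'M[R]_(p, q)) : 'M[R]_(P * p, q) :=
  \matrix_(i < P * p, j < q) mxget (F (i %/ p))%N (i %% p)%N j.
Definition blkrow p q (Q : nat) (F : nat -> 'M[R]_(p, q)) : 'M[R]_(p, Q * q) :=
  \matrix_(i < p, j < Q * q) mxget (F (j %/ q))%N i (j %% q)%N.

(* generic system (A,B,C): x+ = A x + B u, y = C x, with n states, m inputs, r outputs *)
Definition reachL n m (L : nat) (A : 'M[R]_n) (B : 'M[R]_(n, m)) : 'M[R]_(n, L * m) :=
  blkrow L (fun j => A ^+ (L - 1 - j) *m B).
Definition obsvL n r (L : nat) (A : 'M[R]_n) (C : 'M[R]_(r, n)) : 'M[R]_(L * r, n) :=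
  blkcol L (fun i => C *m A ^+ i).
Definition toepL n m r (L : nat) (A : 'M[R]_n) (B : 'M[R]_(n, m)) (C : 'M[R]_(r, n))
  : 'M[R]_(L * r, L * m) :=
  blk L L (fun i j => if (j < i)%N then C *m A ^+ (i - j - 1) *m B else 0).

Definition is_pinv p q (M : 'M[R]_(p, q)) (X : 'M[R]_(q, p)) : Prop :=
  [/\ M *m X *m M = M, X *m M *m X = X, (M *m X)^T = M *m X & (X *m M)^T = X *m M].

Definition minimal n m r (A : 'M[R]_n) (B : 'M[R]_(n, m)) (C : 'M[R]_(r, n)) : Prop :=
  \rank (reachL n A B) = n /\ \rank (obsvL n A C) = n.
Definition schur n (A : 'M[R]_n) : Prop :=
  forall z : R[i], root (char_poly (map_mx (real_complex R) A)) z -> `|z| < 1.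

Definition GammaM n m r L (A : 'M[R]_n) (B : 'M[R]_(n, m)) (C : 'M[R]_(r, n))
  (Opinv : 'M[R]_(n, L * r)) : 'M[R]_(n, L * m + L * r) :=
  row_mx (reachL L A B - A ^+ L *m Opinv *m toepL L A B C) (A ^+ L *m Opinv).

Definition shiftM k L : 'M[R]_(L * k) := blk L L (fun i j => if j == i.+1 then 1%:M else 0).
Definition EM m r L : 'M[R]_(L * m + L * r, r) :=
  col_mx 0 (blkcol L (fun i => if i == (L - 1)%N then 1%:M else 0)).
Definition PiM m r L : 'M[R]_(L * m + L * r, m) :=
  col_mx (blkcol L (fun i => if i == (L - 1)%N then 1%:M else 0)) 0.
Definition ThetaM n m r L (C : 'M[R]_(r, n)) (Gamma : 'M[R]_(n, L * m + L * r))
  : 'M[R]_(L * m + L * r) :=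
  block_mx (shiftM m L) 0 0 (shiftM r L) + EM m r L *m C *m Gamma.

Definition ioh m r L (u : nat -> 'cV[R]_m) (y : nat -> 'cV[R]_r) (t : nat)
  : 'cV[R]_(L * m + L * r) :=
  col_mx (blkcol L (fun i => u (t - L + i)%N)) (blkcol L (fun i => y (t - L + i)%N)).

Definition gainK m r L (Ak : nat -> 'M[R]_m) (Bk : nat -> 'M[R]_(m, r))
  : 'M[R]_(m, L * m + L * r) :=
  row_mx (blkrow L (fun j => Ak (L - j)%N)) (blkrow L (fun j => Bk (L - j)%N)).

Definition XiM m L (Ak : nat -> 'M[R]_m) : 'M[R]_(L * m) :=
  blk L L (fun i j => (if i == j.+1 then 1%:M else 0)
                      + (if j == (L - 1)%N then Ak (L - i)%N else 0)).
Definition LambdaM m r L (Bk : nat -> 'M[R]_(m, r)) : 'M[R]_(L * m, r) :=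
  blkcol L (fun i => Bk (L - i)%N).
Definition OmegaM m L : 'M[R]_(m, L * m) :=
  blkrow L (fun j => if j == (L - 1)%N then 1%:M else 0).

End Defs.

(* Main.v *)
Require Import Defs.
From HB Require Import structures.
From mathcomp Require Import all_boot all_order all_algebra.
From mathcomp Require Import complex.
From mathcomp Require Import zify.
Set Implicit Arguments. Unset Strict Implicit. Unset Printing Implicit Defensive.
Import Order.TTheory GRing.Theory Num.Theory.
Local Open Scope ring_scope.

Section Infra.
Variable R : rcfType.

Lemma mxgetE p q (M : 'M[R]_(p, q)) (i : 'I_p) (j : 'I_q) : mxget M i j = M i j.
Proof.
rewrite /mxget (insubT (fun k => k < p)%N (ltn_ord i)) (insubT (fun k => k < q)%N (ltn_ord j)).
by congr (M _ _); apply: val_inj.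
Qed.

Lemma mxget_out p q (M : 'M[R]_(p, q)) a b : (~~ (a < p) || ~~ (b < q))%N -> mxget M a b = 0.
Proof.
rewrite /mxget; case/orP => h.
  by rewrite insubN.
by case: insubP => // ? _ _; rewrite insubN.
Qed.

Lemma mxget_outl p q (M : 'M[R]_(p, q)) a b : (p <= a)%N -> mxget M a b = 0.
Proof. by move=> h; rewrite mxget_out // -leqNgt h. Qed.

Lemma mxget_outr p q (M : 'M[R]_(p, q)) a b : (q <= b)%N -> mxget M a b = 0.
Proof. by move=> h; rewrite mxget_out //; apply/orP; right; rewrite -leqNgt. Qed.

Lemma mxget_in p q (M : 'M[R]_(p, q)) a b (ha : (a < p)%N) (hb : (b < q)%N) :
  mxget M a b = M (Ordinal ha) (Ordinal hb).
Proof. by rewrite -mxgetE. Qed.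

Lemma mxget0 p q (M : 'M[R]_(p, q.+1)) (i : 'I_p) : mxget M i 0 = M i 0.
Proof. exact: (mxgetE M i ord0). Qed.

Lemma sum_blocks (V : nmodType) Q q (f : nat -> V) :
  \sum_(k < Q * q) f k = \sum_(j < Q) \sum_(b < q) f (j * q + b)%N.
Proof.
elim: Q => [|Q IH]; first by rewrite mul0n !big_ord0.
rewrite big_ord_recr /= -IH.
rewrite -!(big_mkord xpredT) mulSnr (big_cat_nat _ (leq_addr _ _)) //=.
congr (_ + _).
rewrite -{1}[(Q * q)%N]add0n big_addn addKn big_mkord.
by apply: eq_bigr => i _; rewrite addnC.
Qed.

Lemma divmod_blk q j b : (b < q)%N -> ((j * q + b) %/ q = j /\ (j * q + b) %% q = b)%N.
Proof.
move=> hb; have q0 : (0 < q)%N by apply: leq_ltn_trans hb.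
by rewrite divnMDl // modnMDl divn_small // modn_small // addn0.
Qed.

Lemma blk_lt i a p P : (i < P)%N -> (a < p)%N -> (i * p + a < P * p)%N.
Proof.
move=> hi ha; apply: (@leq_trans (i.+1 * p)); first by rewrite mulSnr ltn_add2l.
by rewrite leq_mul2r hi orbT.
Qed.

Definition bk p P (v : 'cV[R]_(P * p)) (i : nat) : 'cV[R]_p :=
  \col_(a < p) mxget v (i * p + a)%N 0.

Lemma bk_blkcol p P (F : nat -> 'cV[R]_p) i : (i < P)%N -> bk (blkcol P F) i = F i.
Proof.
move=> hi; apply/matrixP => a j; rewrite !mxE ord1.
have ha : (i * p + a < P * p)%N.
  exact: blk_lt.
rewrite (mxget_in _ ha (ltn_ord (0 : 'I_1))) mxE.
have [-> ->] := divmod_blk i (ltn_ord a).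
by rewrite mxget0.
Qed.

Lemma bk_ext p P (v w : 'cV[R]_(P * p)) :
  (forall i, (i < P)%N -> bk v i = bk w i) -> v = w.
Proof.
move=> h; apply/matrixP => k j; rewrite ord1.
have p0 : (0 < p)%N.
  have : (0 < P * p)%N by apply: leq_ltn_trans (ltn_ord k).
  by rewrite muln_gt0 => /andP[].
have hi : (k %/ p < P)%N by rewrite ltn_divLR.
have ha : (k %% p < p)%N by rewrite ltn_mod.
have := h _ hi; move/matrixP/(_ (Ordinal ha) 0); rewrite !mxE /=.
by rewrite -divn_eq !mxget0.
Qed.

Lemma blkcol_ext p q P (F G : nat -> 'M[R]_(p, q)) :
  (forall i, (i < P)%N -> F i = G i) -> blkcol P F = blkcol P G.
Proof.
move=> h; apply/matrixP => k j; rewrite !mxE.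
have p0 : (0 < p)%N.
  have : (0 < P * p)%N by apply: leq_ltn_trans (ltn_ord k).
  by rewrite muln_gt0 => /andP[].
by rewrite h // ltn_divLR.
Qed.

Lemma bkD p P (v w : 'cV[R]_(P * p)) i : bk (v + w) i = bk v i + bk w i.
Proof.
apply/matrixP => a j; rewrite !mxE.
case: (ltnP (i * p + a) (P * p)) => h.
  by rewrite !(mxget_in _ h (ltn_ord (0 : 'I_1))) mxE.
by rewrite !mxget_outl // addr0.
Qed.

Lemma bk0 p P i : bk (0 : 'cV[R]_(P * p)) i = 0.
Proof.
apply/matrixP => a j; rewrite !mxE.
case: (ltnP (i * p + a) (P * p)) => h.
  by rewrite !(mxget_in _ h (ltn_ord (0 : 'I_1))) mxE.
by rewrite !mxget_outl.
Qed.

Lemma bkN p P (v : 'cV[R]_(P * p)) i : bk (- v) i = - bk v i.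
Proof.
apply/matrixP => a j; rewrite !mxE.
case: (ltnP (i * p + a) (P * p)) => h.
  by rewrite !(mxget_in _ h (ltn_ord (0 : 'I_1))) mxE.
by rewrite !mxget_outl // oppr0.
Qed.

Lemma mxget_mul p q s (M : 'M[R]_(p, q)) (N : 'M[R]_(q, s)) a c :
  mxget (M *m N) a c = \sum_(k < q) mxget M a k * mxget N k c.
Proof.
case: (ltnP a p) => ha; last first.
  by rewrite mxget_outl // big1 // => k _; rewrite mxget_outl // mul0r.
case: (ltnP c s) => hc; last first.
  rewrite mxget_outr // big1 // => k _.
  by rewrite (mxget_outr N) // mulr0.
rewrite (mxget_in _ ha hc) mxE; apply: eq_bigr => k _.
by rewrite (mxget_in _ ha (ltn_ord k)) (mxget_in _ (ltn_ord k) hc); congr (M _ _ * N _ _); apply: val_inj.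
Qed.

Lemma mxget_blk p q P Q (F : nat -> nat -> 'M[R]_(p, q)) a b :
  (a < P * p)%N -> (b < Q * q)%N ->
  mxget (blk P Q F) a b = mxget (F (a %/ p) (b %/ q))%N (a %% p)%N (b %% q)%N.
Proof. by move=> ha hb; rewrite (mxget_in _ ha hb) mxE. Qed.

Lemma mxget_blkcol p q P (F : nat -> 'M[R]_(p, q)) a b :
  (a < P * p)%N -> (b < q)%N ->
  mxget (blkcol P F) a b = mxget (F (a %/ p))%N (a %% p)%N b.
Proof. by move=> ha hb; rewrite (mxget_in _ ha hb) mxE. Qed.

Lemma mxget_blkrow p q Q (F : nat -> 'M[R]_(p, q)) a b :
  (a < p)%N -> (b < Q * q)%N ->
  mxget (blkrow Q F) a b = mxget (F (b %/ q))%N a (b %% q)%N.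
Proof. by move=> ha hb; rewrite (mxget_in _ ha hb) mxE. Qed.

Lemma bkE p P (v : 'cV[R]_(P * p)) i (a : 'I_p) : bk v i a 0 = mxget v (i * p + a)%N 0.
Proof. by rewrite mxE. Qed.

Lemma bk_blkmul p q P Q (F : nat -> nat -> 'M[R]_(p, q)) (w : 'cV[R]_(Q * q)) i :
  (i < P)%N -> bk (blk P Q F *m w) i = \sum_(j < Q) F i j *m bk w j.
Proof.
move=> hi; apply/matrixP => a c; rewrite ord1 bkE mxget_mul summxE.
have ha : (i * p + a < P * p)%N by exact: blk_lt.
rewrite (sum_blocks Q q (fun k => mxget (blk P Q F) (i * p + a) k * mxget w k 0)).
apply: eq_bigr => j _; rewrite !mxE; apply: eq_bigr => b _.
have hb : (j * q + b < Q * q)%N by exact: blk_lt.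
rewrite (mxget_blk _ ha hb).
have [-> ->] := divmod_blk i (ltn_ord a).
have [-> ->] := divmod_blk j (ltn_ord b).
by rewrite mxgetE bkE.
Qed.

Lemma blkrow_mul p q Q (F : nat -> 'M[R]_(p, q)) (w : 'cV[R]_(Q * q)) :
  blkrow Q F *m w = \sum_(j < Q) F j *m bk w j.
Proof.
apply/matrixP => a c; rewrite ord1 -mxget0 mxget_mul summxE.
rewrite (sum_blocks Q q (fun k => mxget (blkrow Q F) a k * mxget w k 0)).
apply: eq_bigr => j _; rewrite !mxE; apply: eq_bigr => b _.
have hb : (j * q + b < Q * q)%N by exact: blk_lt.
rewrite (mxget_blkrow _ (ltn_ord a) hb).
have [-> ->] := divmod_blk j (ltn_ord b).
by rewrite mxgetE bkE.
Qed.

Lemma blkcol_mul p q s P (F : nat -> 'M[R]_(p, q)) (M : 'M[R]_(q, s)) :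
  blkcol P F *m M = blkcol P (fun i => F i *m M).
Proof.
apply/matrixP => a c; rewrite -mxgetE mxget_mul mxE mxget_mul.
apply: eq_bigr => k _.
by rewrite (mxget_blkcol _ (ltn_ord a) (ltn_ord k)).
Qed.




Lemma sum_if_eq (V : nmodType) L k (G : nat -> V) :
  \sum_(j < L) (if nat_of_ord j == k then G j else 0) = if (k < L)%N then G k else 0.
Proof.
case: ltnP => h.
  rewrite (bigD1 (Ordinal h)) //= eqxx big1 ?addr0 // => j hj.
  case: eqP => // e; move: hj; rewrite (_ : j = Ordinal h) ?eqxx //; exact: val_inj.
by apply: big1 => j _; rewrite ltn_eqF // (leq_trans (ltn_ord j) h).
Qed.

Lemma mxexpS n (A : 'M[R]_n) k : A *m A ^+ k = A ^+ k.+1.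
Proof. by rewrite exprS mulmxE. Qed.

Lemma traj n m (A : 'M[R]_n) (B : 'M[R]_(n, m)) (x : nat -> 'cV[R]_n) u :
  (forall t, x t.+1 = A *m x t + B *m u t) ->
  forall s k, x (s + k)%N = A ^+ k *m x s + \sum_(j < k) A ^+ (k - 1 - j) *m B *m u (s + j)%N.
Proof.
move=> hx s; elim=> [|k IH]; first by rewrite addn0 big_ord0 expr0 mul1mx addr0.
rewrite addnS hx IH big_ord_recr /= mulmxDr mulmxA mxexpS addrA; congr (_ + _ + _).
  rewrite mulmx_sumr; apply: eq_bigr => j _.
  rewrite !mulmxA mxexpS; congr (_ ^+ _ *m _ *m _).
  have := ltn_ord j; lia.
by rewrite (_ : (k.+1 - 1 - k = 0)%N) ?expr0 ?mul1mx //; lia.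
Qed.

Lemma pinvK p n (M : 'M[R]_(p, n)) X : \rank M = n -> is_pinv M X -> X *m M = 1%:M.
Proof.
move=> rk [h1 _ _ _].
have fr : row_free M^T by rewrite /row_free mxrank_tr rk.
have : (X *m M - 1%:M)^T *m M^T == 0.
  by rewrite -trmx_mul mulmxBr mulmxA h1 mulmx1 subrr trmx0.
rewrite mulmx_free_eq0 // => /eqP/(congr1 trmx); rewrite trmxK trmx0 => /eqP.
by rewrite subr_eq0 => /eqP.
Qed.

Lemma inj_unitmx N (M : 'M[R]_N) :
  (forall x : 'cV[R]_N, M *m x = 0 -> x = 0) -> M \in unitmx.
Proof.
move=> h; rewrite -unitmx_tr -row_free_unit -kermx_eq0.
apply/eqP/row_matrixP => i; rewrite row0.
have := mulmx_ker M^T => /(congr1 (row i)); rewrite row_mul row0 => e.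
have e2 : M *m (row i (kermx M^T))^T = 0.
  by rewrite -[M in M *m _]trmxK -trmx_mul e trmx0.
by have := congr1 trmx (h _ e2); rewrite trmxK trmx0.
Qed.


Lemma add_perm4 (V : zmodType) (c S a b : V) : c + S + a + b = c + (a + b + S).
Proof. by rewrite [a + b + S]addrC -!addrA. Qed.

Lemma bk_obsv n r L (A : 'M[R]_n) (C : 'M[R]_(r, n)) (x : 'cV[R]_n) i :
  (i < L)%N -> bk (obsvL L A C *m x) i = C *m A ^+ i *m x.
Proof. by move=> hi; rewrite /obsvL blkcol_mul bk_blkcol. Qed.

Lemma bk_toep n m r L (A : 'M[R]_n) B (C : 'M[R]_(r, n)) (w : 'cV[R]_(L * m)) i :
  (i < L)%N -> bk (toepL L A B C *m w) i =
  \sum_(j < L) (if (j < i)%N then C *m A ^+ (i - j - 1) *m B else 0) *m bk w j.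
Proof. by move=> hi; rewrite /toepL bk_blkmul. Qed.

Lemma reach_mul n m L (A : 'M[R]_n) (B : 'M[R]_(n, m)) (w : 'cV[R]_(L * m)) :
  reachL L A B *m w = \sum_(j < L) A ^+ (L - 1 - j) *m B *m bk w j.
Proof. by rewrite /reachL blkrow_mul. Qed.

Lemma plant_gamma n m r L (A : 'M[R]_n) (B : 'M[R]_(n, m)) (C : 'M[R]_(r, n)) Opinv
   (x : nat -> 'cV[R]_n) u y :
  \rank (obsvL L A C) = n -> is_pinv (obsvL L A C) Opinv ->
  (forall t, x t.+1 = A *m x t + B *m u t) -> (forall t, y t = C *m x t) ->
  forall t, (L <= t)%N -> GammaM A B C Opinv *m ioh L u y t = x t.
Proof.
move=> rk pi hx hy t hLt.
have ht : t = ((t - L) + L)%N by rewrite subnK.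
set s := (t - L)%N in ht.
set U := blkcol L (fun i => u (t - L + i)%N).
set Y := blkcol L (fun i => y (t - L + i)%N).
have hY : Y = obsvL L A C *m x s + toepL L A B C *m U.
  apply: bk_ext => i hi; rewrite bkD bk_blkcol // bk_obsv // bk_toep //.
  rewrite hy (traj hx s i) mulmxDr mulmxA; congr (_ + _).
  rewrite mulmx_sumr (big_ord_widen L (fun j => C *m (A ^+ (i - 1 - j) *m B *m u (s + j)%N)) (ltnW hi)).
  rewrite big_mkcond; apply: eq_bigr => j _ /=.
  case: ifP => hj; last by rewrite mul0mx.
  rewrite bk_blkcol // !mulmxA; congr (C *m A ^+ _ *m B *m _); lia.
rewrite /GammaM /ioh mul_row_col -/U -/Y hY mulmxBl !mulmxDr !mulmxA.
rewrite -[A ^+ L *m Opinv *m obsvL L A C]mulmxA (pinvK rk pi) mulmx1.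
rewrite ht (traj hx s L) reach_mul.
have -> : \sum_(j < L) A ^+ (L - 1 - j) *m B *m bk U j = \sum_(j < L) A ^+ (L - 1 - j) *m B *m u (s + j)%N.
  by apply: eq_bigr => j _; rewrite bk_blkcol.
set P1 := \sum_(j < L) _; set P2 := A ^+ L *m Opinv *m toepL L A B C *m U.
by rewrite addrC -addrA [P2 + _]addrC subrK.
Qed.


Lemma omega_mul m L (w : 'cV[R]_(L * m)) : (0 < L)%N -> OmegaM R m L *m w = bk w (L - 1).
Proof.
move=> L0; rewrite /OmegaM blkrow_mul.
rewrite (eq_bigr (fun j : 'I_L => if nat_of_ord j == (L - 1)%N then bk w j else 0)).
  by rewrite sum_if_eq ifT //; lia.
by move=> j _; case: ifP => _; rewrite ?mul1mx ?mul0mx.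
Qed.

Lemma bk_lambda m r L (Bk : nat -> 'M[R]_(m, r)) (y : 'cV[R]_r) i :
  (i < L)%N -> bk (LambdaM L Bk *m y) i = Bk (L - i)%N *m y.
Proof. by move=> hi; rewrite /LambdaM blkcol_mul bk_blkcol. Qed.

Lemma bk_xi m L (Ak : nat -> 'M[R]_m) (w : 'cV[R]_(L * m)) i :
  (i < L)%N -> bk (XiM L Ak *m w) i =
  (if (0 < i)%N then bk w (i - 1) else 0) + Ak (L - i)%N *m bk w (L - 1).
Proof.
move=> hi; rewrite /XiM bk_blkmul //.
rewrite (eq_bigr (fun j : 'I_L => (if i == j.+1 then bk w j else 0) +
                   (if nat_of_ord j == (L - 1)%N then Ak (L - i)%N *m bk w j else 0))); last first.
  by move=> j _; rewrite mulmxDl; case: ifP => _; case: ifP => _; rewrite ?mul1mx ?mul0mx.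
rewrite big_split /= (sum_if_eq L (L - 1)%N (fun j => Ak (L - i)%N *m bk w j)) ifT; last by lia.
congr (_ + _); case: i hi => [|i] hi /=.
  by rewrite big1.
rewrite (eq_bigr (fun j : 'I_L => if nat_of_ord j == i then bk w j else 0)).
  by rewrite sum_if_eq ifT ?subn1 //; lia.
by move=> j _; rewrite eqSS eq_sym.
Qed.

Section Ctrl.
Variables (m r L : nat) (Ak : nat -> 'M[R]_m) (Bk : nat -> 'M[R]_(m, r)).
Variables (xi : nat -> 'cV[R]_(L * m)) (u : nat -> 'cV[R]_m) (y : nat -> 'cV[R]_r).
Hypothesis hxi : forall t, xi t.+1 = XiM L Ak *m xi t + LambdaM L Bk *m y t.
Hypothesis hu : forall t, u t = OmegaM R m L *m xi t.

Lemma ctrl_step t i : (i < L)%N ->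
  bk (xi t.+1) i = (if (0 < i)%N then bk (xi t) (i - 1) else 0)
                   + Ak (L - i)%N *m u t + Bk (L - i)%N *m y t.
Proof.
move=> hi; rewrite hxi bkD bk_xi // bk_lambda // hu omega_mul //.
exact: leq_ltn_trans hi.
Qed.

Lemma ctrl_claim s k i : (i < L)%N -> (k <= i.+1)%N ->
  bk (xi (s + k)) i = (if (k <= i)%N then bk (xi s) (i - k) else 0)
    + \sum_(l < k) (Ak (L - i + l)%N *m u (s + k - 1 - l)%N + Bk (L - i + l)%N *m y (s + k - 1 - l)%N).
Proof.
elim: k i => [|k IH] i hi hk.
  by rewrite addn0 big_ord0 addr0 subn0.
rewrite addnS ctrl_step //; case: i hi hk => [|i] hi hk.
  have k0 : k = 0%N by lia.
  subst k; rewrite big_ord1 /= !add0r.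
  by rewrite !addn0 !subn0 subn1.
rewrite /= subn1 /= (IH i); [|lia|lia].
rewrite big_ord_recl /= ltnS subSS add_perm4; congr (_ + _).
have e1 : ((s + k).+1 - 1 - 0 = s + k)%N by lia.
have e2 : (L - i.+1 + 0 = L - i.+1)%N by lia.
rewrite e1 e2; congr (_ + _).
apply: eq_bigr => l _.
have e3 : (L - i.+1 + l.+1 = L - i + l)%N by lia.
have e4 : ((s + k).+1 - 1 - l.+1 = s + k - 1 - l)%N by lia.
by rewrite e3 e4.
Qed.

Lemma ctrl_arx t : (L <= t)%N -> u t = gainK L Ak Bk *m ioh L u y t.
Proof.
move=> hLt; case: (posnP L) => L0.
  rewrite hu /OmegaM /gainK /ioh mul_row_col !blkrow_mul.
  rewrite !big1 ?addr0 //; by move=> [j hj]; exfalso; move: hj; rewrite L0.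
have ht : t = ((t - L) + L)%N by rewrite subnK.
set s := (t - L)%N in ht.
rewrite hu omega_mul // {1}ht (@ctrl_claim s L (L - 1)%N); [|lia|lia].
rewrite ifF; last by lia.
rewrite add0r /gainK /ioh mul_row_col !blkrow_mul -big_split /=.
rewrite [LHS](reindex_inj rev_ord_inj) /=.
apply: eq_bigr => j _; rewrite !bk_blkcol //.
have e1 : (L - (L - 1) + (L - j.+1) = L - j)%N by have := ltn_ord j; lia.
have e2 : (s + L - 1 - (L - j.+1) = t - L + j)%N by have := ltn_ord j; lia.
by rewrite e1 e2.
Qed.

End Ctrl.

Lemma theta_step n m r L (C : 'M[R]_(r, n)) (Gam : 'M[R]_(n, L * m + L * r))
   (u : nat -> 'cV[R]_m) (y : nat -> 'cV[R]_r) t :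
  (L <= t)%N -> y t = C *m (Gam *m ioh L u y t) ->
  ioh L u y t.+1 = ThetaM C Gam *m ioh L u y t + PiM R m r L *m u t.
Proof.
move=> hLt hy.
rewrite /ThetaM mulmxDl -!mulmxA -hy.
rewrite {2}/ioh mul_block_col !mul0mx addr0 add0r.
rewrite /EM /PiM !mul_col_mx !mul0mx !blkcol_mul !add_col_mx addr0 /ioh.
congr col_mx; apply: bk_ext => i hi; rewrite !bkD !bk_blkcol // /shiftM bk_blkmul //.
  rewrite (eq_bigr (fun j : 'I_L => if nat_of_ord j == i.+1 then
      bk (blkcol L (fun i0 => u (t - L + i0)%N)) j else 0)); last first.
    by move=> j _; case: ifP => _; rewrite ?mul1mx ?mul0mx.
  rewrite sum_if_eq; case: ltnP => h.
    rewrite bk_blkcol // ifF ?mul0mx ?addr0; last by lia.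
    by congr u; lia.
  rewrite ifT ?mul1mx ?add0r; last by lia.
  by congr u; lia.
rewrite (eq_bigr (fun j : 'I_L => if nat_of_ord j == i.+1 then
    bk (blkcol L (fun i0 => y (t - L + i0)%N)) j else 0)); last first.
  by move=> j _; case: ifP => _; rewrite ?mul1mx ?mul0mx.
rewrite bk0 addr0 sum_if_eq; case: ltnP => h.
  rewrite bk_blkcol // ifF ?mul0mx ?addr0; last by lia.
  by congr y; lia.
rewrite ifT ?mul1mx ?add0r; last by lia.
by congr y; lia.
Qed.


Lemma ctrl_obsv_unit m L (Ak : nat -> 'M[R]_m) :
  obsvL L (XiM L Ak) (OmegaM R m L) \in unitmx.
Proof.
apply: inj_unitmx => x hx.
pose Xi := XiM L Ak; pose Om := OmegaM R m L.
pose z k := Xi ^+ k *m x.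
pose Bk0 := fun _ : nat => (0 : 'M[R]_(m, 1)).
pose y0 := fun _ : nat => (0 : 'cV[R]_1).
pose uz k := Om *m z k.
have hz : forall t, z t.+1 = Xi *m z t + LambdaM L Bk0 *m y0 t.
  by move=> t; rewrite /z /y0 mulmx0 addr0 mulmxA mxexpS.
have huz : forall t, uz t = Om *m z t by [].
have uz0 : forall k, (k < L)%N -> uz k = 0.
  move=> k hk; rewrite /uz /z mulmxA -(bk_obsv _ _ _ hk) hx.
  exact: bk0.
apply: bk_ext => i hi; rewrite bk0.
have := @ctrl_claim m 1 L Ak Bk0 z uz y0 hz huz 0 (L - 1 - i) (L - 1)%N.
rewrite add0n ifT; last by lia.
rewrite big1; last first.
  by move=> l _; rewrite uz0 /y0 ?mulmx0 ?addr0 //; have := ltn_ord l; lia.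
rewrite addr0 -omega_mul; last by lia.
rewrite -huz uz0; last by lia.
have -> : (L - 1 - (L - 1 - i) = i)%N by lia.
move=> h; have h' := h ltac:(lia) ltac:(lia).
by move: h'; rewrite /z expr0 mul1mx => ->.
Qed.

End Infra.

Unset Implicit Arguments. Set Strict Implicit.

Theorem lemma2 (R : rcfType) (n m r L : nat)
  (A : 'M[R]_n) (B : 'M[R]_(n, m)) (C : 'M[R]_(r, n))
  (Ak : nat -> 'M[R]_m) (Bk : nat -> 'M[R]_(m, r))
  (Opinv : 'M[R]_(n, L * r))
  (x0 : 'cV[R]_n)
  (ud : nat -> 'cV[R]_m) (xd : nat -> 'cV[R]_n) (yd : nat -> 'cV[R]_r)
  (vI : nat -> 'cV[R]_(L * m + L * r)) (uI : nat -> 'cV[R]_m) (yI : nat -> 'cV[R]_r)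
  (xc : nat -> 'cV[R]_n) (xic : nat -> 'cV[R]_(L * m))
  (uc : nat -> 'cV[R]_m) (yc : nat -> 'cV[R]_r) :
  (* standing assumptions *)
  minimal A B C -> schur A ->
  (* rank O_L = n, Opinv = O_L^dagger *)
  \rank (obsvL L A C) = n ->
  is_pinv (obsvL L A C) Opinv ->
  (* a trajectory of Sigma_s (producing the IOH v(L)) *)
  xd 0%N = x0 ->
  (forall t, xd t.+1 = A *m xd t + B *m ud t) ->
  (forall t, yd t = C *m xd t) ->
  (* closed loop of the IOH system with u = K v, t >= L, started at v(L) *)
  vI L = ioh L ud yd L ->
  (forall t, (L <= t)%N ->
     vI t.+1 = ThetaM C (GammaM A B C Opinv) *m vI t + PiM R m r L *m uI t) ->
  (forall t, (L <= t)%N -> uI t = gainK L Ak Bk *m vI t) ->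
  (forall t, (L <= t)%N -> yI t = C *m GammaM A B C Opinv *m vI t) ->
  (* feedback interconnection of Sigma_s and K_s, t >= 0 *)
  xc 0%N = x0 ->
  xic 0%N = invmx (obsvL L (XiM L Ak) (OmegaM R m L))
            *m row_mx 1%:M
                 (- toepL L (XiM L Ak) (LambdaM L Bk) (OmegaM R m L))
            *m ioh L ud yd L ->
  (forall t, xc t.+1 = A *m xc t + B *m uc t) ->
  (forall t, yc t = C *m xc t) ->
  (forall t, xic t.+1 = XiM L Ak *m xic t + LambdaM L Bk *m yc t) ->
  (forall t, uc t = OmegaM R m L *m xic t) ->
  forall t, (L <= t)%N -> uI t = uc t /\ yI t = yc t.
Proof.
move=> _ _ rk pi hx0 hxd hyd hv hvI huI hyI hxc0 hxi0 hxc hyc hxi huc.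
set Gam := GammaM A B C Opinv.
set Xi := XiM L Ak; set Om := OmegaM R m L; set Lam := LambdaM L Bk.
set OK := obsvL L Xi Om.
have hO : OK *m xic 0%N = row_mx 1%:M (- toepL L Xi Lam Om) *m ioh L ud yd L.
  by rewrite hxi0 -!mulmxA mulKVmx // ctrl_obsv_unit.
have init : forall t, (t < L)%N -> [/\ xc t = xd t, yc t = yd t & uc t = ud t].
  elim/ltn_ind => t IH htL.
  have hx : xc t = xd t.
    case: t IH htL => [|t] IH htL; first by rewrite hxc0 hx0.
    have [e1 _ e3] := IH t (ltnSn t) (ltnW htL).
    by rewrite hxc hxd e1 e3.
  have hy : yc t = yd t by rewrite hyc hyd hx.
  split => //.
  have e := congr1 (fun v => bk v t) hO; move: e => /=.
  rewrite bk_obsv // /ioh mul_row_col mul1mx mulNmx bkD bkN bk_blkcol // bk_toep // => e.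
  rewrite huc; have := traj hxi 0 t; rewrite add0n => ->.
  rewrite mulmxDr mulmxA e subnn add0n.
  set S1 := \sum_(j < L) _.
  suff -> : Om *m (\sum_(j < t) Xi ^+ (t - 1 - j) *m Lam *m yc (0 + j)%N) = S1 by rewrite subrK.
  rewrite mulmx_sumr (big_ord_widen L (fun j => Om *m (Xi ^+ (t - 1 - j) *m Lam *m yc (0 + j)%N)) (ltnW htL)).
  rewrite big_mkcond; apply: eq_bigr => j _ /=.
  case: ifP => hj; last by rewrite mul0mx.
  have [_ e2 _] := IH j hj (ltn_trans hj htL).
  rewrite bk_blkcol // !add0n e2 !mulmxA.
  by rewrite (_ : (t - 1 - j = t - j - 1)%N) //; lia.
have key : forall k, vI (L + k)%N = ioh L uc yc (L + k)%N.
  elim => [|k IH].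
    rewrite addn0 hv /ioh; congr col_mx; apply: blkcol_ext => i hi;
      rewrite subnn add0n; have [_ e2 e3] := init i hi; by rewrite ?e2 ?e3.
  rewrite addnS hvI ?leq_addr // huI ?leq_addr // IH -(ctrl_arx hxi huc) ?leq_addr //.
  rewrite -theta_step ?leq_addr //.
  by rewrite (plant_gamma rk pi hxc hyc) ?leq_addr.
move=> t hLt; have := key (t - L)%N; rewrite subnKC // => hk.
split.
  by rewrite huI // hk -(ctrl_arx hxi huc).
by rewrite hyI // hk -mulmxA (plant_gamma rk pi hxc hyc).
Qed.
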